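(* There exists a real binary sextic form $q\in F_{2,6}$ having two distinct signatures; i.e. the natural analogue of Sylvester's law of inertia fails for binary sextics.
   Context: $F_{2,6}$ is the space of real binary sextic forms in $x,y$. A representation of $p$ is an expression $p=\sum_{j=1}^r\lambda_j(\alpha_jx+\beta_jy)^{6}$ with $r\ge0$, $\alpha_j,\beta_j\in\mathbb R$, $0\ne\lambda_j\in\mathbb R$; it is honest if the linear forms $\alpha_jx+\beta_jy$ are pairwise non-proportional. Its badge is $(a,b)$ where $a=\#\{j:\lambda_j>0\}$, $b=\#\{j:\lambda_j<0\}$; $\mathcal B(p)$ is the set of badges of honest representations. With $(a,b)\preceq(c,d)$ iff $a\le c,b\le d$, a signature is a minimal element of $\mathcal B(p)$. *)

(* Defs.v *)
From Stdlib Require Import Reals Lra Lia.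
Open Scope R_scope.

Fixpoint rsum (n : nat) (f : nat -> R) : R :=
  match n with
  | O => 0
  | S m => rsum m f + f m
  end.

(* F_{2,6}: real binary sextic forms, viewed as functions R^2 -> R of the
   form  sum_{k=0}^6 c_k x^(6-k) y^k  (a real polynomial is determined by
   its values on R^2). *)
Definition sextic_form (p : R -> R -> R) : Prop :=
  exists c : nat -> R, forall x y : R,
    p x y = rsum 7 (fun k => c k * x ^ (6 - k) * y ^ k).

Definition is_representation (p : R -> R -> R) (r : nat)
  (lam al be : nat -> R) : Prop :=
  (forall i, (i < r)%nat -> lam i <> 0) /\
  (forall x y : R, p x y = rsum r (fun i => lam i * (al i * x + be i * y) ^ 6)).

(* honest: the linear forms are pairwise non-proportional
   (al_i x + be_i y and al_j x + be_j y are proportional iff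
    al_i be_j - al_j be_i = 0) *)
Definition honest (r : nat) (al be : nat -> R) : Prop :=
  forall i j, (i < r)%nat -> (j < r)%nat -> i <> j ->
    al i * be j - al j * be i <> 0.

Fixpoint count_pos (n : nat) (lam : nat -> R) : nat :=
  match n with
  | O => O
  | S m => (count_pos m lam + if Rlt_dec 0 (lam m) then 1 else 0)%nat
  end.

Fixpoint count_neg (n : nat) (lam : nat -> R) : nat :=
  match n with
  | O => O
  | S m => (count_neg m lam + if Rlt_dec (lam m) 0 then 1 else 0)%nat
  end.

Definition badge_of (p : R -> R -> R) (ab : nat * nat) : Prop :=
  exists r lam al be,
    is_representation p r lam al be /\ honest r al be /\
    ab = (count_pos r lam, count_neg r lam).

Definition badge_le (ab cd : nat * nat) : Prop :=
  (fst ab <= fst cd)%nat /\ (snd ab <= snd cd)%nat.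

Definition signature (p : R -> R -> R) (ab : nat * nat) : Prop :=
  badge_of p ab /\
  forall cd, badge_of p cd -> badge_le cd ab -> cd = ab.

(* Main.v *)
Require Import Defs.
From Stdlib Require Import Reals Lra Lia Psatz.
Open Scope R_scope.

Definition cq (k : nat) : R := match k with | 0%nat => (150589038816) | 1%nat => (-597625055424) | 2%nat => (-131425733520) | 3%nat => (1721661605280) | 4%nat => (-249282590580) | 5%nat => (-1578177487764) | _ => (398652863237) end.
Definition q (x y : R) : R := rsum 7 (fun k => cq k * x ^ (6 - k) * y ^ k).
Lemma q_expand x y : q x y = (150589038816)*x^6*y^0 + (-597625055424)*x^5*y^1 + (-131425733520)*x^4*y^2 + (1721661605280)*x^3*y^3 + (-249282590580)*x^2*y^4 + (-1578177487764)*x^1*y^5 + (398652863237)*x^0*y^6.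
Proof. unfold q, cq. simpl. ring. Qed.
Lemma q_at1 x : q x 1 = (150589038816)*x^6 + (-597625055424)*x^5 + (-131425733520)*x^4 + (1721661605280)*x^3 + (-249282590580)*x^2 + (-1578177487764)*x + (398652863237).
Proof. rewrite q_expand. ring. Qed.
Definition lamA (i : nat) : R := match i with | 0%nat => (1626502592) | 1%nat => (46775365650) | 2%nat => (-4555462800) | 3%nat => (-821788645392) | _ => (1780723035) end.
Definition alA (i : nat) : R := match i with | 0%nat => (3) | 1%nat => (2) | 2%nat => (3) | 3%nat => (1) | _ => (2) end.
Definition beA (i : nat) : R := match i with | 0%nat => (5) | 1%nat => (1) | 2%nat => (2) | 3%nat => (2) | _ => (5) end.
Definition lamB (i : nat) : R := match i with | 0%nat => (6922489184) | 1%nat => (-128609457075) | 2%nat => (4859300160) | 3%nat => (-647906688) | _ => (-2591626752) end.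
Definition alB (i : nat) : R := match i with | 0%nat => (3) | 1%nat => (2) | 2%nat => (3) | 3%nat => (2) | _ => (2) end.
Definition beB (i : nat) : R := match i with | 0%nat => (-4) | 1%nat => (-3) | 2%nat => (-5) | 3%nat => (-5) | _ => (-1) end.

Lemma coeff7 (c0 c1 c2 c3 c4 c5 c6 d0 d1 d2 d3 d4 d5 d6 : R) :
  (forall x, c0*x^6 + c1*x^5 + c2*x^4 + c3*x^3 + c4*x^2 + c5*x + c6 =
             d0*x^6 + d1*x^5 + d2*x^4 + d3*x^3 + d4*x^2 + d5*x + d6) ->
  c0 = d0 /\ c1 = d1 /\ c2 = d2 /\ c3 = d3 /\ c4 = d4 /\ c5 = d5 /\ c6 = d6.
Proof.
  intros H.
  pose proof (H 0) as E0; pose proof (H 1) as E1; pose proof (H (-1)) as E2;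
  pose proof (H 2) as E3; pose proof (H (-2)) as E4; pose proof (H 3) as E5; pose proof (H (-3)) as E6.
  simpl in E0, E1, E2, E3, E4, E5, E6.
  repeat split; lra.
Qed.

Definition G0 (b0 b1 b2 b3 : R) := b0*b1*b2*b3.
Definition G1 (a0 a1 a2 a3 b0 b1 b2 b3 : R) := -(a0*b1*b2*b3 + b0*a1*b2*b3 + b0*b1*a2*b3 + b0*b1*b2*a3).
Definition G2 (a0 a1 a2 a3 b0 b1 b2 b3 : R) := a0*a1*b2*b3 + a0*b1*a2*b3 + a0*b1*b2*a3 + b0*a1*a2*b3 + b0*a1*b2*a3 + b0*b1*a2*a3.
Definition G3 (a0 a1 a2 a3 b0 b1 b2 b3 : R) := -(a0*a1*a2*b3 + a0*a1*b2*a3 + a0*b1*a2*a3 + b0*a1*a2*a3).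
Definition G4 (a0 a1 a2 a3 : R) := a0*a1*a2*a3.
Definition hessP (X Y h0 h1 h2 h3 h4 : R) :=
  (12*h0*X^2 + 6*h1*X*Y + 2*h2*Y^2) * (2*h2*X^2 + 6*h3*X*Y + 12*h4*Y^2)
  - (3*h1*X^2 + 4*h2*X*Y + 3*h3*Y^2)^2.

Lemma hess_id a0 a1 a2 a3 b0 b1 b2 b3 X Y :
  let L0 := b0*X - a0*Y in let L1 := b1*X - a1*Y in let L2 := b2*X - a2*Y in let L3 := b3*X - a3*Y in
  hessP X Y (G0 b0 b1 b2 b3) (G1 a0 a1 a2 a3 b0 b1 b2 b3) (G2 a0 a1 a2 a3 b0 b1 b2 b3) (G3 a0 a1 a2 a3 b0 b1 b2 b3) (G4 a0 a1 a2 a3)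
  = -3 * ( ((a0*b1-a1*b0)*L2*L3)^2 + ((a0*b2-a2*b0)*L1*L3)^2 + ((a0*b3-a3*b0)*L1*L2)^2
         + ((a1*b2-a2*b1)*L0*L3)^2 + ((a1*b3-a3*b1)*L0*L2)^2 + ((a2*b3-a3*b2)*L0*L1)^2).
Proof. intros. unfold hessP, G0, G1, G2, G3, G4, L0, L1, L2, L3. ring. Qed.

Lemma hess_nonpos a0 a1 a2 a3 b0 b1 b2 b3 X Y :
  hessP X Y (G0 b0 b1 b2 b3) (G1 a0 a1 a2 a3 b0 b1 b2 b3) (G2 a0 a1 a2 a3 b0 b1 b2 b3) (G3 a0 a1 a2 a3 b0 b1 b2 b3) (G4 a0 a1 a2 a3) <= 0.
Proof.
  rewrite hess_id.
  match goal with |- -3 * (?A ^2 + ?B ^2 + ?C ^2 + ?D ^2 + ?E ^2 + ?F ^2) <= 0 =>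
    pose proof (pow2_ge_0 A); pose proof (pow2_ge_0 B); pose proof (pow2_ge_0 C);
    pose proof (pow2_ge_0 D); pose proof (pow2_ge_0 E); pose proof (pow2_ge_0 F) end.
  lra.
Qed.

Lemma inv_id a0 a1 a2 a3 b0 b1 b2 b3 :
  let h0 := G0 b0 b1 b2 b3 in let h1 := G1 a0 a1 a2 a3 b0 b1 b2 b3 in let h2 := G2 a0 a1 a2 a3 b0 b1 b2 b3 in
  let h3 := G3 a0 a1 a2 a3 b0 b1 b2 b3 in let h4 := G4 a0 a1 a2 a3 in
  12*h0*h4 - 3*h1*h3 + h2^2 = /2 * ( ((a0*b1-a1*b0)*(a2*b3-a3*b2))^2 + ((a0*b2-a2*b0)*(a1*b3-a3*b1))^2 + ((a0*b3-a3*b0)*(a1*b2-a2*b1))^2).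
Proof. intros. unfold h0,h1,h2,h3,h4,G0, G1, G2, G3, G4. field. Qed.

Lemma sq_pos (u : R) : u <> 0 -> 0 < u^2.
Proof. intro H. replace (u^2) with (Rsqr u) by (unfold Rsqr; ring). apply Rsqr_pos_lt; exact H. Qed.

Lemma inv_pos a0 a1 a2 a3 b0 b1 b2 b3 :
  a0*b1-a1*b0 <> 0 -> a2*b3-a3*b2 <> 0 ->
  0 < 12*(G0 b0 b1 b2 b3)*(G4 a0 a1 a2 a3) - 3*(G1 a0 a1 a2 a3 b0 b1 b2 b3)*(G3 a0 a1 a2 a3 b0 b1 b2 b3) + (G2 a0 a1 a2 a3 b0 b1 b2 b3)^2.
Proof.
  intros H1 H2.
  pose proof (inv_id a0 a1 a2 a3 b0 b1 b2 b3) as E. cbv zeta in E. rewrite E.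
  pose proof (sq_pos ((a0*b1-a1*b0)*(a2*b3-a3*b2))) as P1.
  assert (Hn : (a0*b1-a1*b0)*(a2*b3-a3*b2) <> 0) by (apply Rmult_integral_contrapositive_currified; assumption).
  specialize (P1 Hn).
  pose proof (pow2_ge_0 ((a0*b2-a2*b0)*(a1*b3-a3*b1))).
  pose proof (pow2_ge_0 ((a0*b3-a3*b0)*(a1*b2-a2*b1))).
  lra.
Qed.

Definition M4 (l0 l1 l2 l3 a0 a1 a2 a3 b0 b1 b2 b3 : R) (k : nat) :=
  l0*a0^(6-k)*b0^k + l1*a1^(6-k)*b1^k + l2*a2^(6-k)*b2^k + l3*a3^(6-k)*b3^k.

Section Apol4.
Variables l0 l1 l2 l3 a0 a1 a2 a3 b0 b1 b2 b3 : R.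
Let M := M4 l0 l1 l2 l3 a0 a1 a2 a3 b0 b1 b2 b3.
Let H0 := G0 b0 b1 b2 b3.
Let H1 := G1 a0 a1 a2 a3 b0 b1 b2 b3.
Let H2 := G2 a0 a1 a2 a3 b0 b1 b2 b3.
Let H3 := G3 a0 a1 a2 a3 b0 b1 b2 b3.
Let H4 := G4 a0 a1 a2 a3.
Lemma apol4_0 : H0 * M 0 + H1 * M 1 + H2 * M 2 + H3 * M 3 + H4 * M 4 = 0.
Proof. unfold M, M4, H0, H1, H2, H3, H4, G0, G1, G2, G3, G4. simpl. ring. Qed.
Lemma apol4_1 : H0 * M 1 + H1 * M 2 + H2 * M 3 + H3 * M 4 + H4 * M 5 = 0.
Proof. unfold M, M4, H0, H1, H2, H3, H4, G0, G1, G2, G3, G4. simpl. ring. Qed.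
Lemma apol4_2 : H0 * M 2 + H1 * M 3 + H2 * M 4 + H3 * M 5 + H4 * M 6 = 0.
Proof. unfold M, M4, H0, H1, H2, H3, H4, G0, G1, G2, G3, G4. simpl. ring. Qed.
End Apol4.

Definition K0 (b0 b1 b2 : R) := b0*b1*b2.
Definition K1 (a0 a1 a2 b0 b1 b2 : R) := -(a0*b1*b2 + b0*a1*b2 + b0*b1*a2).
Definition K2 (a0 a1 a2 b0 b1 b2 : R) := a0*a1*b2 + a0*b1*a2 + b0*a1*a2.
Definition K3 (a0 a1 a2 : R) := -(a0*a1*a2).
Definition M3 (l0 l1 l2 a0 a1 a2 b0 b1 b2 : R) (k : nat) :=
  l0*a0^(6-k)*b0^k + l1*a1^(6-k)*b1^k + l2*a2^(6-k)*b2^k.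

Section Apol3.
Variables l0 l1 l2 a0 a1 a2 b0 b1 b2 : R.
Let M := M3 l0 l1 l2 a0 a1 a2 b0 b1 b2.
Let H0 := K0 b0 b1 b2.
Let H1 := K1 a0 a1 a2 b0 b1 b2.
Let H2 := K2 a0 a1 a2 b0 b1 b2.
Let H3 := K3 a0 a1 a2.
Lemma apol3_0 : H0 * M 0 + H1 * M 1 + H2 * M 2 + H3 * M 3 = 0.
Proof. unfold M, M3, H0, H1, H2, H3, K0, K1, K2, K3. simpl. ring. Qed.
Lemma apol3_1 : H0 * M 1 + H1 * M 2 + H2 * M 3 + H3 * M 4 = 0.
Proof. unfold M, M3, H0, H1, H2, H3, K0, K1, K2, K3. simpl. ring. Qed.
Lemma apol3_2 : H0 * M 2 + H1 * M 3 + H2 * M 4 + H3 * M 5 = 0.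
Proof. unfold M, M3, H0, H1, H2, H3, K0, K1, K2, K3. simpl. ring. Qed.
Lemma apol3_3 : H0 * M 3 + H1 * M 4 + H2 * M 5 + H3 * M 6 = 0.
Proof. unfold M, M3, H0, H1, H2, H3, K0, K1, K2, K3. simpl. ring. Qed.
End Apol3.

Lemma pencil_contra h0 h1 h2 h3 h4 m0 m1 m2 m3 m4 m5 m6 :
  (150589038816) = 1*m0 -> (-597625055424) = 6*m1 -> (-131425733520) = 15*m2 -> (1721661605280) = 20*m3 -> (-249282590580) = 15*m4 -> (-1578177487764) = 6*m5 -> (398652863237) = 1*m6 ->
  h0*m0 + h1*m1 + h2*m2 + h3*m3 + h4*m4 = 0 ->
  h0*m1 + h1*m2 + h2*m3 + h3*m4 + h4*m5 = 0 ->
  h0*m2 + h1*m3 + h2*m4 + h3*m5 + h4*m6 = 0 ->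
  hessP 1 (-4) h0 h1 h2 h3 h4 <= 0 -> hessP 3 1 h0 h1 h2 h3 h4 <= 0 ->
  0 < 12*h0*h4 - 3*h1*h3 + h2^2 -> False.
Proof.
  intros E0 E1 E2 E3 E4 E5 E6 A0 A1 A2 P1 P2 I.
  assert (F0 : m0 = (150589038816)) by lra. assert (F1 : m1 = (-99604175904)) by lra.
  assert (F2 : m2 = (-8761715568)) by lra. assert (F3 : m3 = (86083080264)) by lra.
  assert (F4 : m4 = (-16618839372)) by lra. assert (F5 : m5 = (-263029581294)) by lra.
  assert (F6 : m6 = (398652863237)) by lra.
  subst m0 m1 m2 m3 m4 m5 m6.
  assert (Eh2 : h2 = (-128074800067361/23845043392400)*h0 + (4543018810767/1192252169620)*h1) by lra.
  assert (Eh3 : h3 = (-63805949175597/23845043392400)*h0 + (2095726056839/1192252169620)*h1) by lra.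
  assert (Eh4 : h4 = (-4691395663353/2384504339240)*h0 + (131468993763/119225216962)*h1) by lra.
  assert (Id : (397257121766743908999544236511/284293047192719450188880000)*(-1024*(12*h0*h4 - 3*h1*h3 + h2^2) + hessP 1 (-4) h0 h1 h2 h3 h4 + 2*hessP 3 1 h0 h1 h2 h3 h4)
             = ((397257121766743908999544236511/284293047192719450188880000)*h0 + (-11643367523805836069721841377/14214652359635972509444000)*h1)^2 + (139033063176007731881470273585833/284293047192719450188880000)*h1^2).
  { rewrite Eh2, Eh3, Eh4. unfold hessP. field. }
  pose proof (pow2_ge_0 ((397257121766743908999544236511/284293047192719450188880000)*h0 + (-11643367523805836069721841377/14214652359635972509444000)*h1)).
  pose proof (pow2_ge_0 h1).
  lra.
Qed.

Lemma four l0 l1 l2 l3 a0 a1 a2 a3 b0 b1 b2 b3 :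
  (forall x, q x 1 = l0*(a0*x+b0*1)^6 + l1*(a1*x+b1*1)^6 + l2*(a2*x+b2*1)^6 + l3*(a3*x+b3*1)^6) ->
  a0*b1-a1*b0 <> 0 -> a2*b3-a3*b2 <> 0 -> False.
Proof.
  intros H d01 d23.
  set (M := M4 l0 l1 l2 l3 a0 a1 a2 a3 b0 b1 b2 b3).
  assert (Hpoly : forall x, (150589038816)*x^6 + (-597625055424)*x^5 + (-131425733520)*x^4 + (1721661605280)*x^3 + (-249282590580)*x^2 + (-1578177487764)*x + (398652863237) =
     (1*M 0%nat)*x^6 + (6*M 1%nat)*x^5 + (15*M 2%nat)*x^4 + (20*M 3%nat)*x^3 + (15*M 4%nat)*x^2 + (6*M 5%nat)*x + (1*M 6%nat)).
  { intro x. rewrite <- (q_at1 x). rewrite H. unfold M, M4. simpl. ring. }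
  destruct (coeff7 _ _ _ _ _ _ _ _ _ _ _ _ _ _ Hpoly) as (E0&E1&E2&E3&E4&E5&E6).
  pose proof (apol4_0 l0 l1 l2 l3 a0 a1 a2 a3 b0 b1 b2 b3) as A0.
  pose proof (apol4_1 l0 l1 l2 l3 a0 a1 a2 a3 b0 b1 b2 b3) as A1.
  pose proof (apol4_2 l0 l1 l2 l3 a0 a1 a2 a3 b0 b1 b2 b3) as A2.
  fold M in A0, A1, A2.
  exact (pencil_contra _ _ _ _ _ _ _ _ _ _ _ _ E0 E1 E2 E3 E4 E5 E6 A0 A1 A2
    (hess_nonpos a0 a1 a2 a3 b0 b1 b2 b3 1 (-4)) (hess_nonpos a0 a1 a2 a3 b0 b1 b2 b3 3 1)
    (inv_pos a0 a1 a2 a3 b0 b1 b2 b3 d01 d23)).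
Qed.

Lemma small3 l0 l1 l2 a0 a1 a2 b0 b1 b2 :
  (forall x, q x 1 = l0*(a0*x+b0*1)^6 + l1*(a1*x+b1*1)^6 + l2*(a2*x+b2*1)^6) ->
  K0 b0 b1 b2 = 0 /\ K1 a0 a1 a2 b0 b1 b2 = 0.
Proof.
  intros H.
  set (M := M3 l0 l1 l2 a0 a1 a2 b0 b1 b2).
  assert (Hpoly : forall x, (150589038816)*x^6 + (-597625055424)*x^5 + (-131425733520)*x^4 + (1721661605280)*x^3 + (-249282590580)*x^2 + (-1578177487764)*x + (398652863237) =
     (1*M 0%nat)*x^6 + (6*M 1%nat)*x^5 + (15*M 2%nat)*x^4 + (20*M 3%nat)*x^3 + (15*M 4%nat)*x^2 + (6*M 5%nat)*x + (1*M 6%nat)).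
  { intro x. rewrite <- (q_at1 x). rewrite H. unfold M, M3. simpl. ring. }
  destruct (coeff7 _ _ _ _ _ _ _ _ _ _ _ _ _ _ Hpoly) as (E0&E1&E2&E3&E4&E5&E6).
  pose proof (apol3_0 l0 l1 l2 a0 a1 a2 b0 b1 b2) as A0.
  pose proof (apol3_1 l0 l1 l2 a0 a1 a2 b0 b1 b2) as A1.
  pose proof (apol3_2 l0 l1 l2 a0 a1 a2 b0 b1 b2) as A2.
  pose proof (apol3_3 l0 l1 l2 a0 a1 a2 b0 b1 b2) as A3.
  fold M in A0, A1, A2, A3.
  assert (F0 : M 0%nat = (150589038816)) by lra. assert (F1 : M 1%nat = (-99604175904)) by lra.
  assert (F2 : M 2%nat = (-8761715568)) by lra. assert (F3 : M 3%nat = (86083080264)) by lra.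
  assert (F4 : M 4%nat = (-16618839372)) by lra. assert (F5 : M 5%nat = (-263029581294)) by lra.
  assert (F6 : M 6%nat = (398652863237)) by lra.
  rewrite F0, F1, F2, F3, F4, F5, F6 in *.
  split; lra.
Qed.

Lemma no_small r lam al be :
  is_representation q r lam al be -> honest r al be -> (r <= 4)%nat -> False.
Proof.
  intros [Hnz Hrep] Hh Hr.
  destruct r as [|[|[|[|[|r]]]]]; [ | | | | | lia].
  -
    assert (H3 : forall x, q x 1 = 0*(0*x+1*1)^6 + 0*(0*x+1*1)^6 + 0*(0*x+1*1)^6).
    { intro x. rewrite Hrep. simpl. ring. }
    destruct (small3 _ _ _ _ _ _ _ _ _ H3) as [K _]. unfold K0 in K. lra.
  -
    assert (H3 : forall x, q x 1 = lam 0%nat*(al 0%nat*x+be 0%nat*1)^6 + 0*(0*x+1*1)^6 + 0*(0*x+1*1)^6).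
    { intro x. rewrite Hrep. simpl. ring. }
    destruct (small3 _ _ _ _ _ _ _ _ _ H3) as [Ka Kb]. unfold K0 in Ka. unfold K1 in Kb.
    assert (Hb : be 0%nat = 0) by lra.
    assert (Ha : al 0%nat = 0) by (rewrite Hb in Kb; lra).
    pose proof (Hrep 0 1) as E. rewrite q_expand in E. simpl in E. rewrite Ha, Hb in E. lra.
  -
    assert (H3 : forall x, q x 1 = lam 0%nat*(al 0%nat*x+be 0%nat*1)^6 + lam 1%nat*(al 1%nat*x+be 1%nat*1)^6 + 0*(0*x+1*1)^6).
    { intro x. rewrite Hrep. simpl. ring. }
    destruct (small3 _ _ _ _ _ _ _ _ _ H3) as [Ka Kb]. unfold K0 in Ka. unfold K1 in Kb.
    assert (D01 := Hh 0%nat 1%nat ltac:(lia) ltac:(lia) ltac:(lia)).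
    replace (be 0%nat * be 1%nat * 1) with (be 0%nat * be 1%nat) in Ka by ring.
    destruct (Rmult_integral _ _ Ka) as [Hb|Hb].
    + apply D01. rewrite Hb in *. assert (al 0%nat * be 1%nat = 0) by lra. rewrite H. ring.
    + apply D01. rewrite Hb in *. assert (be 0%nat * al 1%nat = 0) by lra. lra.
  -
    assert (H3 : forall x, q x 1 = lam 0%nat*(al 0%nat*x+be 0%nat*1)^6 + lam 1%nat*(al 1%nat*x+be 1%nat*1)^6 + lam 2%nat*(al 2%nat*x+be 2%nat*1)^6).
    { intro x. rewrite Hrep. simpl. ring. }
    destruct (small3 _ _ _ _ _ _ _ _ _ H3) as [Ka Kb]. unfold K0 in Ka. unfold K1 in Kb.
    assert (D01 := Hh 0%nat 1%nat ltac:(lia) ltac:(lia) ltac:(lia)).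
    assert (D02 := Hh 0%nat 2%nat ltac:(lia) ltac:(lia) ltac:(lia)).
    assert (D12 := Hh 1%nat 2%nat ltac:(lia) ltac:(lia) ltac:(lia)).
    set (a0 := al 0%nat) in *. set (a1 := al 1%nat) in *. set (a2 := al 2%nat) in *.
    set (b0 := be 0%nat) in *. set (b1 := be 1%nat) in *. set (b2 := be 2%nat) in *.
    destruct (Rmult_integral _ _ Ka) as [Hb|Hb2].
    + destruct (Rmult_integral _ _ Hb) as [Hb0|Hb1].
      *
        rewrite Hb0 in Kb.
        assert (E : a0 * (b1 * b2) = 0) by lra.
        destruct (Rmult_integral _ _ E) as [Ha0|E'].
        -- apply D01. rewrite Ha0, Hb0. ring.
        -- destruct (Rmult_integral _ _ E') as [Hb1|Hb2].
           ++ apply D01. rewrite Hb0, Hb1. ring.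
           ++ apply D02. rewrite Hb0, Hb2. ring.
      *
        rewrite Hb1 in Kb.
        assert (E : a1 * (b0 * b2) = 0) by lra.
        destruct (Rmult_integral _ _ E) as [Ha1|E'].
        -- apply D01. rewrite Ha1, Hb1. ring.
        -- destruct (Rmult_integral _ _ E') as [Hb0|Hb2].
           ++ apply D01. rewrite Hb0, Hb1. ring.
           ++ apply D12. rewrite Hb1, Hb2. ring.
    +
      rewrite Hb2 in Kb.
      assert (E : a2 * (b0 * b1) = 0) by lra.
      destruct (Rmult_integral _ _ E) as [Ha2|E'].
      * apply D02. rewrite Ha2, Hb2. ring.
      * destruct (Rmult_integral _ _ E') as [Hb0|Hb1].
        -- apply D02. rewrite Hb0, Hb2. ring.
        -- apply D12. rewrite Hb1, Hb2. ring.
  -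
    assert (H4 : forall x, q x 1 = lam 0%nat*(al 0%nat*x+be 0%nat*1)^6 + lam 1%nat*(al 1%nat*x+be 1%nat*1)^6
                                 + lam 2%nat*(al 2%nat*x+be 2%nat*1)^6 + lam 3%nat*(al 3%nat*x+be 3%nat*1)^6).
    { intro x. rewrite Hrep. simpl. ring. }
    assert (D01 := Hh 0%nat 1%nat ltac:(lia) ltac:(lia) ltac:(lia)).
    assert (D23 := Hh 2%nat 3%nat ltac:(lia) ltac:(lia) ltac:(lia)).
    exact (four _ _ _ _ _ _ _ _ _ _ _ _ H4 D01 D23).
Qed.

Lemma count_sum r lam : (forall i, (i < r)%nat -> lam i <> 0) ->
  (count_pos r lam + count_neg r lam)%nat = r.
Proof.
  induction r as [|r IH]; intros H; simpl; [reflexivity|].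
  assert (IH' : (count_pos r lam + count_neg r lam)%nat = r) by (apply IH; intros i Hi; apply H; lia).
  assert (Hr : lam r <> 0) by (apply H; lia).
  destruct (Rlt_dec 0 (lam r)); destruct (Rlt_dec (lam r) 0); try lia; exfalso; try lra; apply Hr; lra.
Qed.

Lemma sig5 a b : badge_of q (a, b) -> (a + b = 5)%nat -> signature q (a, b).
Proof.
  intros Hb Hs. split; [exact Hb|].
  intros [c d] [r [lam [al [be [Hrep [Hh Hcd]]]]]] [Hl1 Hl2]. simpl in Hl1, Hl2.
  injection Hcd as Hc Hd. subst c d.
  pose proof (count_sum r lam (proj1 Hrep)) as Hsum.
  destruct (Nat.le_gt_cases r 4) as [Hr|Hr].
  - exfalso. exact (no_small r lam al be Hrep Hh Hr).
  - f_equal; lia.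
Qed.

Ltac solve_nz := first [ exfalso; lia | intro; lra ].

Lemma repA : is_representation q 5 lamA alA beA.
Proof.
  split.
  - intros i Hi. destruct i as [|[|[|[|[|i]]]]]; unfold lamA; solve_nz.
  - intros x y. rewrite q_expand. unfold rsum, lamA, alA, beA. ring.
Qed.

Lemma repB : is_representation q 5 lamB alB beB.
Proof.
  split.
  - intros i Hi. destruct i as [|[|[|[|[|i]]]]]; unfold lamB; solve_nz.
  - intros x y. rewrite q_expand. unfold rsum, lamB, alB, beB. ring.
Qed.

Lemma honestA : honest 5 alA beA.
Proof.
  intros i j Hi Hj Hij.
  destruct i as [|[|[|[|[|i]]]]]; destruct j as [|[|[|[|[|j]]]]]; unfold alA, beA; solve_nz.
Qed.

Lemma honestB : honest 5 alB beB.
Proof.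
  intros i j Hi Hj Hij.
  destruct i as [|[|[|[|[|i]]]]]; destruct j as [|[|[|[|[|j]]]]]; unfold alB, beB; solve_nz.
Qed.

Ltac count_tac :=
  simpl; repeat (match goal with |- context [Rlt_dec ?a ?b] => destruct (Rlt_dec a b) end);
  first [ reflexivity | exfalso; lra ].

Lemma cntA : (count_pos 5 lamA, count_neg 5 lamA) = (3%nat, 2%nat).
Proof. unfold lamA. f_equal; count_tac. Qed.

Lemma cntB : (count_pos 5 lamB, count_neg 5 lamB) = (2%nat, 3%nat).
Proof. unfold lamB. f_equal; count_tac. Qed.

Theorem corollary4p5 :
  exists q : R -> R -> R, sextic_form q /\
    exists s1 s2 : nat * nat, signature q s1 /\ signature q s2 /\ s1 <> s2.
Proof.
  exists q. split.
  - exists cq. intros x y. reflexivity.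
  - exists (3%nat, 2%nat), (2%nat, 3%nat). split; [|split].
    + apply sig5; [|reflexivity].
      exists 5%nat, lamA, alA, beA. split; [exact repA|split; [exact honestA|]].
      rewrite cntA. reflexivity.
    + apply sig5; [|reflexivity].
      exists 5%nat, lamB, alB, beB. split; [exact repB|split; [exact honestB|]].
      rewrite cntB. reflexivity.
    + intro H. inversion H.
Qed.
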